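(* Let $a_1,\dots,a_n$ be pairwise coprime positive integers, $n>2$, and let $P=\prod_{i=1}^na_i$. Then the numerical semigroup $H=\langle P/a_1,\dots,P/a_n\rangle$ is a complete intersection semigroup which is not quadratic.
   Context: For a numerical semigroup $H$ with minimal generating set $\{g_1,\dots,g_m\}$ and a field $K$, $I_H=\ker(K[x_1,\dots,x_m]\to K[t],\ x_i\mapsto t^{g_i})$; $H$ is a complete intersection semigroup if $I_H$ is minimally generated by $\operatorname{height}I_H$ elements. For $f\neq0$, $f^*$ is its lowest-degree homogeneous component, $I_H^*=(f^*:0\neq f\in I_H)$; $H$ is quadratic if $I_H^*$ is generated by homogeneous polynomials of degree 2. *)

(* Defs.v *)
From mathcomp Require Import all_boot all_order all_algebra.
From mathcomp Require Import mpoly.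
Set Implicit Arguments. Unset Strict Implicit. Unset Printing Implicit Defensive.
Import GRing.Theory.
Local Open Scope ring_scope.

Section Defs.
Context (K : fieldType) (m : nat).
Local Notation R := {mpoly K[m]}.

Definition gen_ideal (S : R -> Prop) : R -> Prop :=
  fun p => exists (s : seq R) (c : seq R),
    (forall q, q \in s -> S q) /\ size c = size s /\
    p = \sum_(i < size s) c`_i * s`_i.

Definition generates (S I : R -> Prop) : Prop :=
  forall p, gen_ideal S p <-> I p.

Definition is_ideal (I : R -> Prop) : Prop :=
  I 0 /\ (forall p q, I p -> I q -> I (p + q)) /\
  (forall a p, I p -> I (a * p)).

Definition is_prime (P : R -> Prop) : Prop :=
  is_ideal P /\ ~ P 1 /\ (forall a b, P (a * b) -> P a \/ P b).

Definition strict_subset (A B : R -> Prop) : Prop :=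
  (forall p, A p -> B p) /\ exists p, B p /\ ~ A p.

Definition ht_ge (P : R -> Prop) (k : nat) : Prop :=
  exists C : nat -> (R -> Prop),
    (forall i, (i <= k)%N -> is_prime (C i)) /\
    (forall i, (i < k)%N -> strict_subset (C i) (C i.+1)) /\
    (forall p, C k p <-> P p).

Definition prime_height (P : R -> Prop) (h : nat) : Prop :=
  ht_ge P h /\ ~ ht_ge P h.+1.

Definition ideal_height (I : R -> Prop) (h : nat) : Prop :=
  (exists P, is_prime P /\ (forall p, I p -> P p) /\ prime_height P h) /\
  (forall P, is_prime P -> (forall p, I p -> P p) -> ht_ge P h).

Definition min_num_gens (I : R -> Prop) (mu : nat) : Prop :=
  (exists s : seq R, size s = mu /\ generates (fun q => q \in s) I) /\
  (forall s : seq R, generates (fun q => q \in s) I -> (mu <= size s)%N).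

Definition semigroup_ideal (g : 'I_m -> nat) : R -> Prop :=
  fun p => mmap (@polyC K) (fun i => 'X^(g i) : {poly K}) p = 0.

(* lowest total degree of a monomial of p (for p <> 0) *)
Definition low_deg (p : R) : nat :=
  foldr minn (msize p) [seq mdeg mm | mm <- msupp p].

Definition initial_form (p : R) : R :=
  \sum_(mm <- msupp p | mdeg mm == low_deg p) p@_mm *: 'X_[mm].

Definition initial_ideal (g : 'I_m -> nat) : R -> Prop :=
  gen_ideal (fun q => exists f, semigroup_ideal g f /\ f <> 0 /\ q = initial_form f).

Definition complete_intersection (g : 'I_m -> nat) : Prop :=
  exists h, ideal_height (semigroup_ideal g) h /\
            min_num_gens (semigroup_ideal g) h.

Definition quadratic (g : 'I_m -> nat) : Prop :=
  exists S : R -> Prop, (forall q, S q -> q \is 2.-homog) /\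
    generates S (initial_ideal g).

End Defs.

Definition in_semigroup (m : nat) (g : 'I_m -> nat) (x : nat) : Prop :=
  exists c : 'I_m -> nat, x = (\sum_(i < m) c i * g i)%N.

(* g is the minimal generating set (listed without repetition) of <g>,
   which is a numerical semigroup (gcd 1) *)
Definition minimal_generating_system (m : nat) (g : 'I_m -> nat) : Prop :=
  injective g /\ (forall i, 0 < g i)%N /\
  (\big[gcdn/0]_(i < m) g i = 1)%N /\
  (forall i, ~ exists c : 'I_m -> nat, c i = 0%N /\ g i = (\sum_(j < m) c j * g j)%N).

(* Main.v *)
Require Import Defs.
From mathcomp Require Import all_boot all_order all_algebra.
From mathcomp Require Import mpoly.
From mathcomp Require Import zify.
Set Implicit Arguments. Unset Strict Implicit. Unset Printing Implicit Defensive.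

Section Arith.
Variables (n : nat) (a : 'I_n -> nat).
Hypothesis a_gt1 : forall i, (1 < a i)%N.
Hypothesis a_cop : forall i j, i != j -> coprime (a i) (a j).

Definition PP := (\prod_(i < n) a i)%N.
Definition gg (i : 'I_n) := (PP %/ a i)%N.

Lemma a_gt0 i : (0 < a i)%N.
Proof. by apply: leq_trans (a_gt1 i). Qed.

Lemma PP_split i : PP = (a i * \prod_(j < n | j != i) a j)%N.
Proof. by rewrite /PP (bigD1 i). Qed.

Lemma ggE i : gg i = (\prod_(j < n | j != i) a j)%N.
Proof. by rewrite /gg (PP_split i) mulKn // a_gt0. Qed.

Lemma aMg i : (a i * gg i)%N = PP.
Proof. by rewrite ggE -(PP_split i). Qed.

Lemma PP_gt0 : (0 < PP)%N.
Proof. by rewrite /PP prodn_gt0 // => i; apply: a_gt0. Qed.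

Lemma gg_gt0 i : (0 < gg i)%N.
Proof. by rewrite ggE prodn_gt0 // => j; apply: a_gt0. Qed.

Lemma dvd_a_g i j : i != j -> (a i %| gg j)%N.
Proof.
move=> ij; rewrite ggE (bigD1 i) /=; first by apply: dvdn_mulr. by [].  
Qed.

Lemma cop_g_a i : coprime (gg i) (a i).
Proof.
rewrite ggE; apply: (big_ind (fun x => coprime x (a i))).
- exact: coprime1n.
- by move=> x y Hx Hy; rewrite coprimeMl Hx Hy.
- by move=> j ji; apply: a_cop.
Qed.

Lemma not_dvd_a_g i : ~~ (a i %| gg i)%N.
Proof.
apply/negP => H.
have := cop_g_a i; rewrite /coprime (gcdn_idPr H) => /eqP Ha.
by have := a_gt1 i; rewrite Ha.
Qed.

Definition ww (m : 'X_{1..n}) : nat := (\sum_(i < n) m i * gg i)%N.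

Lemma wwD m1 m2 : ww (m1 + m2)%MM = (ww m1 + ww m2)%N.
Proof.
by rewrite /ww -big_split /=; apply: eq_bigr => i _; rewrite mnmDE mulnDl.
Qed.

Lemma ww0 : ww 0%MM = 0%N.
Proof. by rewrite /ww big1 // => i _; rewrite mnm0E. Qed.

Lemma ww_mod_a (u : 'X_{1..n}) k : (ww u %% a k = (u k * gg k) %% a k)%N.
Proof.
rewrite /ww (bigD1 k) //=.
have: (a k %| \sum_(j < n | j != k) u j * gg j)%N.
  by apply: dvdn_sum => j jk; apply: dvdn_mull; apply: dvd_a_g; rewrite eq_sym.
by case/dvdnP=> q ->; rewrite addnC modnMDl.
Qed.

Lemma ww_eq_mod (u v : 'X_{1..n}) k : ww u = ww v -> (u k = v k %[mod a k])%N.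
Proof.
move=> E.
have H : (u k * gg k = v k * gg k %[mod a k])%N by rewrite -!ww_mod_a E.
have cop : coprime (a k) (gg k) by rewrite coprime_sym cop_g_a.
wlog le : u v E H / (u k <= v k)%N.
  move=> W; case: (leqP (u k) (v k)) => le; first exact: W.
  by apply/esym; apply: W => //; apply: ltnW.
apply/eqP; rewrite eq_sym eqn_mod_dvd //.
have le2 : (u k * gg k <= v k * gg k)%N by apply: leq_mul.
move/eqP: H; rewrite eq_sym eqn_mod_dvd // -mulnBl.
by rewrite Gauss_dvdl.
Qed.

Lemma ww_ge_comp (u : 'X_{1..n}) k : (u k * gg k <= ww u)%N.
Proof. by rewrite /ww (bigD1 k) //= leq_addr. Qed.

Lemma ww_ge_PP (u v : 'X_{1..n}) : ww u = ww v -> u != v -> (PP <= ww u)%N.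
Proof.
move=> E; apply: contraNT; rewrite -ltnNge => lt; apply/eqP/mnmP => k.
have := ww_eq_mod k E.
have hu : (u k < a k)%N.
  rewrite -(ltn_pmul2r (gg_gt0 k)) aMg; exact: leq_ltn_trans (ww_ge_comp u k) lt.
have hv : (v k < a k)%N.
  rewrite -(ltn_pmul2r (gg_gt0 k)) aMg; rewrite E in lt; exact: leq_ltn_trans (ww_ge_comp v k) lt.
by rewrite !modn_small.
Qed.

End Arith.

Import GRing.Theory.
Local Open Scope ring_scope.

Section Generic.
Variables (K : fieldType) (n : nat).
Local Notation R := {mpoly K[n]}.

Lemma kernel_prime (S : idomainType) (f : {rmorphism R -> S}) :
  is_prime (fun p => f p = 0).
Proof.
split; [split; [|split]|split].
- exact: rmorph0.
- by move=> p q hp hq; rewrite rmorphD hp hq addr0.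
- by move=> c p hp; rewrite rmorphM hp mulr0.
- by rewrite rmorph1 => /eqP; rewrite oner_eq0.
- by move=> p q; rewrite rmorphM => /eqP; rewrite mulf_eq0 => /orP [] /eqP; [left|right].
Qed.

Lemma low_deg_le (p : R) m : m \in msupp p -> (low_deg p <= mdeg m)%N.
Proof.
rewrite /low_deg; elim: (msupp p) => [|x s IH] //=.
rewrite inE => /orP [/eqP ->|/IH h]; first exact: geq_minl.
by rewrite geq_min h orbT.
Qed.

Lemma low_deg_ge (p : R) b : (b <= msize p)%N ->
  (forall m, m \in msupp p -> (b <= mdeg m)%N) -> (b <= low_deg p)%N.
Proof.
rewrite /low_deg => hs; elim: (msupp p) => [|x s IH] h //=.
rewrite leq_min h ?inE ?eqxx // IH // => m hm; apply: h; by rewrite inE hm orbT.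
Qed.

Lemma coef_initial_form (p : R) m :
  (initial_form p)@_m = if mdeg m == low_deg p then p@_m else 0.
Proof.
rewrite /initial_form raddf_sum /= big_mkcond /=.
under eq_bigr do rewrite mcoeffZ mcoeffX.
case: (boolP (m \in msupp p)) => hm.
  rewrite (bigD1_seq m) ?msupp_uniq //= eqxx mulr1 big1 ?addr0 //.
  by move=> x; rewrite eq_sym => /negPf ->; rewrite mulr0; case: ifP.
rewrite big1_seq; first by case: ifP => // _; rewrite memN_msupp_eq0.
move=> x /andP [_ hx]; have xm : (x == m) = false by apply/negP => /eqP ex; move: hm; rewrite -ex hx.
by rewrite xm mulr0; case: ifP.
Qed.

End Generic.

Section Poly.
Variables (K : fieldType) (n : nat) (a : 'I_n -> nat).
Hypothesis a_gt1 : forall i, (1 < a i)%N.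
Hypothesis a_cop : forall i j, i != j -> coprime (a i) (a j).
Local Notation R := {mpoly K[n]}.
Local Notation g := (gg a).
Local Notation w := (ww a).
Local Notation P := (PP a).

Definition phiH (p : R) : {poly K} := mmap (@polyC K) (fun i => 'X^(g i)) p.

Lemma phiHE p : phiH p = \sum_(m <- msupp p) (p@_m)%:P * 'X^(w m).
Proof.
rewrite /phiH /mmap; apply: eq_bigr => m _; congr (_ * _).
rewrite /mmap1 /ww; under eq_bigr do rewrite -exprM.
by rewrite prodrXr; congr ('X^ _); apply: eq_bigr => i _; rewrite mulnC.
Qed.

Lemma coef_phiH p d : (phiH p)`_d = \sum_(m <- msupp p | w m == d) p@_m.
Proof.
rewrite phiHE coef_sum [RHS]big_mkcond /=; apply: eq_bigr => m _.
by rewrite coefCM coefXn eq_sym; case: eqP => _; rewrite ?mulr1 ?mulr0.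
Qed.

Lemma IHP p : @semigroup_ideal K n g p <->
  forall d, \sum_(m <- msupp p | w m == d) p@_m = 0.
Proof.
rewrite /semigroup_ideal -/(phiH p); split.
  by move=> h d; rewrite -coef_phiH h coef0.
by move=> h; apply/polyP => d; rewrite coef_phiH h coef0.
Qed.

Lemma IH_prime : is_prime (@semigroup_ideal K n g).
Proof. exact: (kernel_prime (mmap (@polyC K) (fun i => 'X^(g i)))). Qed.

Lemma IH_ideal : is_ideal (@semigroup_ideal K n g).
Proof. by case: IH_prime. Qed.

Lemma phiH_X m : phiH 'X_[m] = 'X^(w m).
Proof. by rewrite phiHE msuppX big_seq1 mcoeffX eqxx mul1r. Qed.

Definition Good (p : R) := forall m, m \in msupp p -> (P <= w m)%N.

Lemma IH_Good p : @semigroup_ideal K n g p -> Good p.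
Proof.
move=> /IHP h m hm; apply: contraTT isT; rewrite -ltnNge => lt.
have := h (w m); rewrite big_mkcond (bigD1_seq m) ?msupp_uniq //= eqxx big1 ?addr0.
  by move/eqP; rewrite mcoeff_eq0 hm.
move=> m' ne; case: eqP => // e.
by have := ww_ge_PP a_gt1 a_cop e ne; rewrite e leqNgt lt.
Qed.

Lemma Good0 : Good 0.
Proof. by move=> m; rewrite msupp0. Qed.

Lemma GoodD p q : Good p -> Good q -> Good (p + q).
Proof.
move=> hp hq m /msuppD_le; rewrite mem_cat => /orP []; [exact: hp|exact: hq].
Qed.

Lemma GoodM c q : Good q -> Good (c * q).
Proof.
move=> hq m /msuppM_le /allpairsP [[m1 m2] /= [h1 h2 ->]].
by rewrite wwD (leq_trans (hq _ h2)) // leq_addl.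
Qed.

Lemma Good_sum (I : Type) (r : seq I) (F : I -> R) :
  (forall i, Good (F i)) -> Good (\sum_(i <- r) F i).
Proof.
move=> h; elim: r => [|x r IH]; first by rewrite big_nil; exact: Good0.
by rewrite big_cons; apply: GoodD.
Qed.

Lemma Good_gen (S : R -> Prop) : (forall q, S q -> Good q) ->
  forall p, gen_ideal S p -> Good p.
Proof.
move=> hS p [s [c [hs [_ ->]]]].
rewrite -(big_mkord xpredT (fun i => c`_i * s`_i)).
apply: Good_sum => i; apply: GoodM.
case: (ltnP i (size s)) => hi; first by apply: hS; apply: hs; apply: mem_nth.
by rewrite nth_default //; exact: Good0.
Qed.

Lemma IH_const0 p : @semigroup_ideal K n g p -> p@_0%MM = 0.
Proof.
move=> /IH_Good h; apply/eqP; rewrite mcoeff_eq0; apply/negP => /h.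
by rewrite ww0 leqn0 => /eqP e; have := PP_gt0 a_gt1; rewrite e.
Qed.

End Poly.


Section Chain.
Variables (K : fieldType) (n' : nat) (a : 'I_n'.+1 -> nat).
Local Notation n := n'.+1.
Hypothesis a_gt1 : forall i, (1 < a i)%N.
Hypothesis a_cop : forall i j, i != j -> coprime (a i) (a j).
Local Notation R := {mpoly K[n]}.
Local Notation T := {mpoly {poly K}[n]}.
Local Notation g := (gg a).
Local Notation IH := (@semigroup_ideal K n g).

Definition cf : {rmorphism K -> T} := (@mpolyC n {poly K}) \o (@polyC K).
Definition hk (k : nat) (i : 'I_n) : T :=
  if (i <= k)%N then ('X^(g i))%:MP else 'X_i.
Definition phik (k : nat) (p : R) : T := mmap cf (hk k) p.

Lemma phik_X k i : phik k 'X_i = hk k i.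
Proof. by rewrite /phik mmapX mmap1U. Qed.

Lemma phik_M k p q : phik k (p * q) = phik k p * phik k q.
Proof. exact: rmorphM. Qed.
Lemma phik_B k p q : phik k (p - q) = phik k p - phik k q.
Proof. exact: rmorphB. Qed.
Lemma phik_Xn k p e : phik k (p ^+ e) = phik k p ^+ e.
Proof. exact: rmorphXn. Qed.

Lemma phi_last p : phik n' p = (phiH a p)%:MP.
Proof.
rewrite /phik /phiH /mmap rmorph_sum; apply: eq_bigr => m _.
rewrite rmorphM rmorph_prod; congr (_ * _); apply: eq_bigr => i _.
by rewrite rmorphXn /hk -ltnS ltn_ord.
Qed.

Definition hk' (k : nat) (j : 'I_n) : T :=
  if j == k.+1 :> nat then ('X^(g j))%:MP else 'X_j.
Definition psik k (q : T) : T := mmap (@mpolyC n {poly K}) (hk' k) q.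

Lemma phi_step k p : phik k.+1 p = psik k (phik k p).
Proof.
rewrite /psik /phik [mmap cf (hk k) p]/mmap [mmap cf (hk k.+1) p]/mmap rmorph_sum; apply: eq_bigr => m _.
rewrite rmorphM rmorph_prod; congr (_ * _).
  by rewrite /= mmapC.
apply: eq_bigr => i _; rewrite rmorphXn; congr (_ ^+ _).
rewrite /hk /=; case: (leqP i k) => hi.
  by rewrite mmapC (leq_trans hi).
rewrite mmapX mmap1U /hk'; case: eqP => e.
  by rewrite e leqnn.
by rewrite leqNgt ltn_neqAle eq_sym hi; move/eqP: e => ->.
Qed.

Lemma phi_mono k p : phik k p = 0 -> phik k.+1 p = 0.
Proof. by rewrite phi_step => ->; rewrite /psik mmap0. Qed.

Lemma phi_mono_le k l p : (k <= l)%N -> phik k p = 0 -> phik l p = 0.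
Proof.
move=> /subnK <-; elim: (l - k)%N => [|d IH] // h.
by rewrite addSn; apply: phi_mono; apply: IH.
Qed.

Lemma g_gt0 i : (0 < g i)%N.
Proof. exact: gg_gt0. Qed.

Lemma phi_strict k : (k < n')%N ->
  exists p, phik k.+1 p = 0 /\ phik k p != 0.
Proof.
move=> kn.
pose j : 'I_n := inord k.+1; pose z : 'I_n := ord0.
have jv : (j : nat) = k.+1 by rewrite inordK.
exists ('X_j ^+ g z - 'X_z ^+ g j); split.
  rewrite phik_B !phik_Xn !phik_X /hk jv leqnn /= -!rmorphXn -!exprM mulnC.
  by rewrite subrr.
rewrite phik_B !phik_Xn !phik_X /hk jv ltnn /=.
apply/eqP => /mpolyP /(_ (U_(j) *+ g z)%MM).
rewrite mcoeffB mpolyXn mcoeffX eqxx -rmorphXn mcoeffC mcoeff0.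
have -> : ((U_(j) *+ g z)%MM == 0%MM) = false.
  apply/negP => /eqP /mnmP /(_ j); rewrite mulmnE mnm1E eqxx mnm0E mul1n.
  by move=> e; have := g_gt0 z; rewrite e.
by rewrite mulr0 subr0 => /eqP; rewrite oner_eq0.
Qed.

Definition Ck (k : nat) : R -> Prop := fun p => phik (minn k n') p = 0.

Lemma Ck_prime k : is_prime (Ck k).
Proof. exact: (kernel_prime (mmap cf (hk (minn k n')))). Qed.

Lemma Ck_last p : Ck n' p <-> IH p.
Proof.
rewrite /Ck minnn phi_last /semigroup_ideal -/(phiH a p).
by split => [/eqP|->]; [rewrite mpolyC_eq0 => /eqP|rewrite mpolyC0].
Qed.

Lemma Ck_strict k : (k < n')%N -> strict_subset (Ck k) (Ck k.+1).
Proof.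
move=> kn; rewrite /Ck !(minn_idPl _) ?(ltnW kn) //; split.
  by move=> p; apply: phi_mono.
by have [p [h1 h2]] := phi_strict kn; exists p; split=> // /eqP; rewrite (negPf h2).
Qed.

Lemma ht_ge_IH : ht_ge IH n'.
Proof.
exists Ck; split; [by move=> i _; apply: Ck_prime|split].
  by move=> i; apply: Ck_strict.
exact: Ck_last.
Qed.

Lemma ht_ge_over (Q : R -> Prop) : (0 < n')%N -> is_prime Q ->
  (forall p, IH p -> Q p) -> ht_ge Q n'.
Proof.
move=> n0 hQ sub.
exists (fun i => if (i < n')%N then Ck i else Q); split; [|split].
- by move=> i _; case: ifP => _ //; apply: Ck_prime.
- move=> i hi; rewrite hi; case: ltnP => hi1; first exact: Ck_strict.
  have ie : i.+1 = n' by apply/eqP; rewrite eqn_leq hi1 hi.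
  have [sub1 [p [p1 p2]]] := Ck_strict hi.
  split; first by move=> q /sub1; rewrite ie => /Ck_last /sub.
  by exists p; split => //; apply: sub; apply/Ck_last; rewrite -ie.
- by move=> p; rewrite ltnn.
Qed.

End Chain.


Section Generic2.
Variables (K : fieldType) (n : nat).
Local Notation R := {mpoly K[n]}.

Lemma ideal_sum (I : R -> Prop) (J : Type) (r : seq J) (F : J -> R) :
  is_ideal I -> (forall j, I (F j)) -> I (\sum_(j <- r) F j).
Proof.
move=> [I0 [ID IM]] h; elim: r => [|x r IH]; first by rewrite big_nil.
by rewrite big_cons; apply: ID.
Qed.

Lemma gen_ideal_sub (I S : R -> Prop) p :
  is_ideal I -> (forall q, S q -> I q) -> gen_ideal S p -> I p.
Proof.
move=> hI hS [s [c [hs [_ ->]]]].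
rewrite -(big_mkord xpredT (fun i => c`_i * s`_i)).
apply: ideal_sum => // i; case: hI => [I0 [_ IM]]; apply: IM.
case: (ltnP i (size s)) => hi; first by apply: hS; apply: hs; apply: mem_nth.
by rewrite nth_default.
Qed.

Lemma sum_map_enum k (F G : 'I_k -> R) :
  let s := [seq F j | j <- enum 'I_k] in
  let c := [seq G j | j <- enum 'I_k] in
  \sum_(i < size s) c`_i * s`_i = \sum_(j < k) G j * F j.
Proof.
move=> s c.
rewrite -(big_mkord xpredT (fun i => c`_i * s`_i)).
have -> : size s = k by rewrite size_map size_enum_ord.
rewrite big_mkord; apply: eq_bigr => j _.
by rewrite /s /c !(nth_map j) -?enumT ?size_enum_ord ?ltn_ord // nth_ord_enum.
Qed.

End Generic2.

Section Gens.
Variables (K : fieldType) (n' : nat) (a : 'I_n'.+1 -> nat).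
Local Notation n := n'.+1.
Hypothesis a_gt1 : forall i, (1 < a i)%N.
Hypothesis a_cop : forall i j, i != j -> coprime (a i) (a j).
Local Notation R := {mpoly K[n]}.
Local Notation g := (gg a).
Local Notation w := (ww a).
Local Notation P := (PP a).
Local Notation IH := (@semigroup_ideal K n g).

Definition wj (j : 'I_n') : 'I_n := widen_ord (leqnSn n') j.
Definition EE (i : 'I_n) : 'X_{1..n} := (U_(i) *+ a i)%MM.
Definition fb (j : 'I_n') : R := 'X_[EE (wj j)] - 'X_[EE ord_max].

Lemma ww_sum (I : Type) (r : seq I) (F : I -> 'X_{1..n}) :
  w (\sum_(i <- r) F i)%MM = (\sum_(i <- r) w (F i))%N.
Proof.
elim: r => [|x r IH]; first by rewrite !big_nil ww0.
by rewrite !big_cons wwD IH.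
Qed.

Lemma ww_muln m k : w (m *+ k)%MM = (w m * k)%N.
Proof.
by rewrite /ww big_distrl /=; apply: eq_bigr => i _; rewrite mulmnE mulnAC.
Qed.

Lemma ww_U i : w U_(i)%MM = g i.
Proof.
rewrite /ww (bigD1 i) //= mnm1E eqxx mul1n big1 ?addn0 // => j ji.
by rewrite mnm1E eq_sym (negPf ji).
Qed.

Lemma ww_EE i : w (EE i) = P.
Proof. by rewrite /EE ww_muln ww_U mulnC aMg. Qed.

Lemma fb_IH j : IH (fb j).
Proof.
rewrite /semigroup_ideal -/(phiH a (fb j)).
by rewrite /phiH rmorphB /= -!/(phiH a _) !phiH_X !ww_EE subrr.
Qed.

Definition J (p : R) := exists c : 'I_n' -> R, p = \sum_j c j * fb j.

Lemma J0 : J 0.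
Proof. by exists (fun _ => 0); rewrite big1 // => j _; rewrite mul0r. Qed.

Lemma JD p q : J p -> J q -> J (p + q).
Proof.
move=> [c ->] [d ->]; exists (fun j => c j + d j).
by rewrite -big_split /=; apply: eq_bigr => j _; rewrite mulrDl.
Qed.

Lemma JM c p : J p -> J (c * p).
Proof.
move=> [d ->]; exists (fun j => c * d j).
by rewrite mulr_sumr; apply: eq_bigr => j _; rewrite mulrA.
Qed.

Lemma J_ideal : is_ideal J.
Proof. split; [exact: J0|split; [exact: JD|exact: JM]]. Qed.

Lemma Jfb j : J (fb j).
Proof.
exists (fun k => (k == j)%:R); rewrite (bigD1 j) //= eqxx mul1r big1 ?addr0 //.
by move=> k /negPf ->; rewrite mul0r.
Qed.

Lemma JN p : J p -> J (- p).
Proof. by move=> h; rewrite -mulN1r; apply: JM. Qed.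

Definition cong (x y : R) := J (x - y).

Lemma cong_mul A B C D : cong A B -> cong C D -> cong (A * C) (B * D).
Proof.
move=> h1 h2; rewrite /cong.
have -> : A * C - B * D = C * (A - B) + B * (C - D).
  by rewrite mulrBr mulrBr [C * A]mulrC [C * B]mulrC addrA subrK.
by apply: JD; apply: JM.
Qed.

Lemma cong_refl x : cong x x.
Proof. by rewrite /cong subrr; exact: J0. Qed.

Lemma cong_exp A B k : cong A B -> cong (A ^+ k) (B ^+ k).
Proof.
move=> h; elim: k => [|k IH]; first by rewrite !expr0; apply: cong_refl.
by rewrite !exprS; apply: cong_mul.
Qed.

Lemma cong_prod (I : Type) (r : seq I) (F G : I -> R) :
  (forall i, cong (F i) (G i)) -> cong (\prod_(i <- r) F i) (\prod_(i <- r) G i).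
Proof.
move=> h; elim: r => [|x r IH]; first by rewrite !big_nil; apply: cong_refl.
by rewrite !big_cons; apply: cong_mul.
Qed.

Definition qq (m : 'X_{1..n}) (j : 'I_n') : nat := (m (wj j) %/ a (wj j))%N.
Definition base (m : 'X_{1..n}) : 'X_{1..n} :=
  [multinom (if i == ord_max then m i else (m i %% a i))%N | i < n].
Definition rr (m : 'X_{1..n}) : 'X_{1..n} :=
  (base m + \sum_(j < n') (EE ord_max *+ qq m j))%MM.

Lemma wj_neq j : (wj j != ord_max).
Proof. by rewrite -val_eqE /= neq_ltn ltn_ord. Qed.

Lemma sumE_at (m : 'X_{1..n}) i :
  (\sum_(j < n') (EE (wj j) *+ qq m j))%MM i =
  if i == ord_max then 0%N else (a i * (m i %/ a i))%N.
Proof.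
rewrite mnm_sumE; case: eqP => [->|ne].
  by rewrite big1 // => j _; rewrite mulmnE mulmnE mnm1E (negPf (wj_neq j)).
have ilt : (i < n')%N.
  by rewrite ltn_neqAle -ltnS ltn_ord andbT; apply/eqP => e; apply: ne; apply/val_inj.
pose j0 : 'I_n' := Ordinal ilt.
have wj0 : wj j0 = i by apply/val_inj.
rewrite (bigD1 j0) //= big1 ?addn0.
  by rewrite !mulmnE mnm1E wj0 eqxx mul1n /qq wj0.
move=> j jj0; rewrite !mulmnE mnm1E.
case: eqP => e //; case/eqP: jj0; apply/val_inj => /=.
by move/(congr1 val): e.
Qed.

Lemma sumEl_at (m : 'X_{1..n}) i :
  (\sum_(j < n') (EE ord_max *+ qq m j))%MM i =
  if i == ord_max then (a ord_max * \sum_(j < n') qq m j)%N else 0%N.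
Proof.
rewrite mnm_sumE big_distrr /=; case: eqP => [->|ne].
  by apply: eq_bigr => j _; rewrite mulmnE mulmnE mnm1E eqxx mul1n.
by rewrite big1 // => j _; rewrite !mulmnE mnm1E; case: eqP => // e; case: ne.
Qed.

Lemma m_decomp (m : 'X_{1..n}) :
  m = (base m + \sum_(j < n') (EE (wj j) *+ qq m j))%MM.
Proof.
apply/mnmP => i; rewrite mnmDE sumE_at /base mnmE.
case: eqP => _; first by rewrite addn0.
by rewrite addnC mulnC -divn_eq.
Qed.

Lemma rr_at (m : 'X_{1..n}) i :
  rr m i = if i == ord_max then (m i + a ord_max * \sum_(j < n') qq m j)%N
           else (m i %% a i)%N.
Proof. by rewrite /rr mnmDE sumEl_at /base mnmE; case: eqP; rewrite ?addn0. Qed.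

Definition red (m : 'X_{1..n}) : bool := [forall j : 'I_n', (m (wj j) < a (wj j))%N].

Lemma rr_red m : red (rr m).
Proof. by apply/forallP => j; rewrite rr_at (negPf (wj_neq j)) ltn_pmod // a_gt0. Qed.

Lemma ww_rr m : w (rr m) = w m.
Proof.
rewrite {2}(m_decomp m) /rr !wwD !ww_sum; congr (_ + _)%N.
by apply: eq_bigr => j _; rewrite !ww_muln !ww_U ![(g _ * a _)%N]mulnC !aMg.
Qed.

Lemma red_inj u v : red u -> red v -> w u = w v -> u = v.
Proof.
move=> /forallP ru /forallP rv e.
have hj : forall j : 'I_n', u (wj j) = v (wj j).
  move=> j; have := ww_eq_mod a_gt1 a_cop (wj j) e.
  by rewrite !modn_small.
apply/mnmP => i.
case: (unliftP ord_max i) => [j ->|->].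
  have -> : lift ord_max j = wj j by apply/val_inj; rewrite /= /bump leqNgt ltn_ord.
  exact: hj.
move: e; rewrite /ww !big_ord_recr /=.
have -> : (\sum_(i < n') u (widen_ord (leqnSn n') i) * g (widen_ord (leqnSn n') i) =
          \sum_(i < n') v (widen_ord (leqnSn n') i) * g (widen_ord (leqnSn n') i))%N.
  by apply: eq_bigr => j _; rewrite hj.
by move/addnI/eqP; rewrite eqn_pmul2r ?gg_gt0 // => /eqP.
Qed.

Lemma cong_X m : cong 'X_[m] 'X_[rr m].
Proof.
rewrite {1}(m_decomp m) /rr !mpolyXD -!mprodXE.
apply: cong_mul; first exact: cong_refl.
apply: cong_prod => j; rewrite -(@mpolyXn _ _ (EE (wj j))) -(@mpolyXn _ _ (EE ord_max)); apply: cong_exp.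
exact: Jfb.
Qed.

Definition NF (p : R) := \sum_(m <- msupp p) p@_m *: 'X_[rr m].

Lemma J_sub_NF p : J (p - NF p).
Proof.
rewrite {1}(mpolyE p) /NF -sumrB.
apply: ideal_sum; first exact: J_ideal.
move=> m; rewrite -scalerBr -mul_mpolyC; apply: JM; exact: cong_X.
Qed.

Lemma NF_IH p : IH p -> NF p = 0.
Proof.
move=> /IHP h; apply/mpolyP => mu; rewrite mcoeff0 /NF raddf_sum /=.
under eq_bigr do rewrite mcoeffZ mcoeffX.
case: (boolP (red mu)) => hr; last first.
  rewrite big1 // => m _; case: eqP => [e|]; last by rewrite mulr0.
  by move: hr; rewrite -e rr_red.
rewrite -[RHS](h (w mu)) [RHS]big_mkcond /=; apply: eq_bigr => m _.
have -> : (rr m == mu) = (w m == w mu).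
  apply/eqP/eqP => [<-|e]; first by rewrite ww_rr.
  by apply: red_inj => //; [apply: rr_red|rewrite ww_rr].
by case: ifP; rewrite ?mulr1 ?mulr0.
Qed.

Lemma IH_J p : IH p -> J p.
Proof.
move=> hp; have := J_sub_NF p; by rewrite NF_IH // subr0.
Qed.

Definition fbs : seq R := [seq fb j | j <- enum 'I_n'].

Lemma fbs_size : size fbs = n'.
Proof. by rewrite size_map size_enum_ord. Qed.

Lemma fbs_gen : generates (fun q => q \in fbs) IH.
Proof.
move=> p; split.
  apply: gen_ideal_sub; first exact: IH_ideal.
  by move=> q /mapP [j _ ->]; apply: fb_IH.
move=> /IH_J [c ->]; exists fbs, [seq c j | j <- enum 'I_n']; split => //.
split; first by rewrite !size_map.
by rewrite sum_map_enum.
Qed.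

End Gens.


Section LowerGen.
Variables (K : fieldType) (n' : nat) (a : 'I_n'.+1 -> nat).
Local Notation n := n'.+1.
Hypothesis a_gt1 : forall i, (1 < a i)%N.
Hypothesis a_cop : forall i j, i != j -> coprime (a i) (a j).
Local Notation R := {mpoly K[n]}.
Local Notation g := (gg a).
Local Notation w := (ww a).
Local Notation P := (PP a).
Local Notation IH := (@semigroup_ideal K n g).

Lemma ww_eq0 (m : 'X_{1..n}) : w m = 0%N -> m = 0%MM.
Proof.
move=> e; apply/mnmP => i; rewrite mnm0E.
have := ww_ge_comp a m i; rewrite e leqn0 muln_eq0 => /orP [/eqP //|].
by rewrite eqn0Ngt gg_gt0.
Qed.

Lemma coefM_low (c q : R) E : Good a q -> w E = P -> (c * q)@_E = c@_0%MM * q@_E.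
Proof.
move=> hq wE.
have ec : c = (c@_0%MM)%:MP + (c - (c@_0%MM)%:MP) by rewrite addrC subrK.
rewrite {1}ec mulrDl mcoeffD mcoeffCM.
rewrite [X in _ + X]memN_msupp_eq0 ?addr0 //.
apply/negP => /msuppM_le /allpairsP [[m1 m2] /= [h1 h2 e]].
have m10 : m1 != 0%MM.
  apply/negP => /eqP e1; move: h1; rewrite e1 mcoeff_msupp mcoeffB mcoeffC eqxx mulr1.
  by rewrite subrr eqxx.
have w1 : (0 < w m1)%N.
  by rewrite lt0n; apply/negP => /eqP /ww_eq0 e1; rewrite e1 eqxx in m10.
have := hq _ h2; rewrite -wE e wwD => h.
by have := leq_trans (leq_add w1 (leqnn (w m2))) h; rewrite add1n ltnn.
Qed.

Definition vec (q : R) : 'rV[K]_n' := \row_(j < n') q@_(EE a (wj j)).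

Definition Smx (s : seq R) : 'M[K]_(size s, n') :=
  \matrix_(k < size s, j < n') (s`_k)@_(EE a (wj j)).

Lemma vec_in (s : seq R) q : q \in s -> (vec q <= Smx s)%MS.
Proof.
move=> hq; have hi : (index q s < size s)%N by rewrite index_mem.
have -> : vec q = row (Ordinal hi) (Smx s).
  by apply/rowP => j; rewrite !mxE /= nth_index.
exact: row_sub.
Qed.

Lemma vec_gen (s : seq R) p : (forall q, q \in s -> Good a q) ->
  gen_ideal (fun q => q \in s) p -> (vec p <= Smx s)%MS.
Proof.
move=> hs [t [c [ht [_ ->]]]].
have -> : vec (\sum_(i < size t) c`_i * t`_i) =
    \sum_(i < size t) ((c`_i)@_0%MM *: vec t`_i).
  apply/rowP => j; rewrite mxE summxE raddf_sum /=; apply: eq_bigr => i _.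
  rewrite !mxE coefM_low //; last by rewrite ww_EE.
  by apply: hs; apply: ht; apply: mem_nth.
apply: summx_sub => i _; apply: scalemx_sub; apply: vec_in.
by apply: ht; apply: mem_nth.
Qed.

Lemma EE_eq i i' : (EE a i == EE a i') = (i == i').
Proof.
apply/eqP/eqP => [e|->] //; apply/eqP; apply/negP => /negP ne.
move/mnmP: e => /(_ i); rewrite !mulmnE !mnm1E eqxx [i' == i]eq_sym (negPf ne) mul0n mul1n.
by move=> e; have := a_gt0 a_gt1 i; rewrite e.
Qed.

Lemma vec_fb j : vec (@fb K n' a j) = row j 1%:M.
Proof.
apply/rowP => j'; rewrite !mxE mcoeffB !mcoeffX !EE_eq.
rewrite [ord_max == _]eq_sym (negPf (wj_neq j')) subr0.
by congr (_%:R); apply/eqP/eqP => [/(congr1 val)/= e|->] //; apply/val_inj.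
Qed.

Lemma gens_lower (s : seq R) : generates (fun q => q \in s) IH -> (n' <= size s)%N.
Proof.
move=> hgen.
have hs : forall q, q \in s -> Good a q.
  move=> q hq; apply: (IH_Good a_gt1 a_cop); apply/hgen.
  exists [:: q], [:: 1]; split; first by move=> x; rewrite inE => /eqP ->.
  by split => //; rewrite big_ord_recl big_ord0 addr0 mul1r.
have sub : (1%:M <= Smx s)%MS.
  apply/row_subP => j; rewrite -vec_fb; apply: vec_gen => //.
  by apply/hgen; apply: fb_IH.
have := mxrankS sub; rewrite mxrank1 => h.
exact: leq_trans h (rank_leq_row _).
Qed.

Lemma min_gens_IH : min_num_gens IH n'.
Proof.
split; last exact: gens_lower.
exists (@fbs K n' a); split; first exact: fbs_size.
exact: fbs_gen.
Qed.

End LowerGen.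


Section ChainLemma.
Variables (K : fieldType) (N : nat).
Local Notation R := {mpoly K[N]}.
Variables (L : nat) (y : 'I_L -> R) (Q : nat -> R -> Prop).
Hypothesis Qp : forall i, (i < L)%N -> is_prime (Q i).
Hypothesis QLi : is_ideal (Q L).
Hypothesis QL1 : ~ Q L 1.
Hypothesis Qsub : forall i p, (i < L)%N -> Q i p -> Q i.+1 p.
Hypothesis yin : forall i : 'I_L, Q i.+1 (y i).
Hypothesis yout : forall i : 'I_L, ~ Q i (y i).
Variables (T : finType) (ex : T -> 'I_L -> nat) (c : T -> K).

Lemma Q_ideal i : (i <= L)%N -> is_ideal (Q i).
Proof.
rewrite leq_eqVlt => /orP [/eqP ->//|/Qp]; by case.
Qed.

Lemma prime_pow_out i (z : R) e : (i < L)%N -> ~ Q i z -> ~ Q i (z ^+ e).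
Proof.
move=> hi hz; have [hI [h1 hp]] := Qp hi.
elim: e => [|e IH]; first by rewrite expr0.
by rewrite exprS => /hp [].
Qed.

Definition Pi (i : nat) (t : T) : R := \prod_(k : 'I_L | (i <= k)%N) y k ^+ ex t k.
Definition Ssum (i : nat) (A : pred T) : R := \sum_(t | A t) c t *: Pi i t.

Definition claim (i : nat) := forall A : pred T,
  (forall t t', A t -> A t' -> (forall k : 'I_L, (i <= k)%N -> ex t k = ex t' k) -> t = t') ->
  (exists t, A t /\ c t != 0) -> ~ Q i (Ssum i A).

Lemma claim_base : claim L.
Proof.
move=> A inj [t0 [At0 ct0]].
have PiL t : Pi L t = 1.
  by rewrite /Pi big_pred0 // => k; rewrite leqNgt ltn_ord.
rewrite /Ssum (big_pred1 t0); last first.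
  move=> t; apply/idP/eqP => [At|->//]; apply: inj => // k; by rewrite leqNgt ltn_ord.
rewrite PiL => h; apply: QL1.
have -> : (1 : R) = (c t0)^-1 *: (c t0 *: 1) by rewrite scalerA mulVf // scale1r.
case: QLi => [_ [_ IM]]; rewrite -mul_mpolyC; exact: IM.
Qed.

Lemma Pi_split i (hi : (i < L)%N) t :
  Pi i t = y (Ordinal hi) ^+ ex t (Ordinal hi) * Pi i.+1 t.
Proof.
rewrite /Pi (bigD1 (Ordinal hi)) //=; congr (_ * _); apply: eq_bigl => k.
by rewrite ltn_neqAle andbC; congr (_ && _); rewrite -val_eqE /= eq_sym.
Qed.

Lemma claim_step i (hi : (i < L)%N) : claim i.+1 -> claim i.
Proof.
move=> IH A inj [t0 [At0 ct0]].
set k0 := Ordinal hi.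
pose Pm := fun t => A t && (c t != 0).
have Pt0 : Pm t0 by rewrite /Pm At0 ct0.
case: (arg_minnP (fun t => ex t k0) Pt0) => tm /andP [Atm ctm] minP.
set mn := ex tm k0.
pose A' := fun t => A t && (ex t k0 == mn).
pose W := \sum_(t | A t && ~~ (ex t k0 == mn)) c t *: (y k0 ^+ (ex t k0 - mn.+1) * Pi i.+1 t).
have decomp : Ssum i A = y k0 ^+ mn * (Ssum i.+1 A' + y k0 * W).
  rewrite /Ssum (bigID (fun t => ex t k0 == mn)) /= mulrDr; congr (_ + _).
    rewrite mulr_sumr; apply: eq_bigr => t /andP [_ /eqP e].
    by rewrite Pi_split -/k0 e scalerAr.
  rewrite /W mulr_sumr mulr_sumr; apply: eq_bigr => t /andP [At ne].
  case: (eqVneq (c t) 0) => [->|ctn]; first by rewrite !scale0r !mulr0.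
  have ge : (mn < ex t k0)%N.
    by rewrite ltn_neqAle eq_sym ne /=; apply: minP; rewrite /Pm At ctn.
  rewrite Pi_split -/k0.
  have er : ex t k0 = (mn + (ex t k0 - mn.+1).+1)%N by rewrite addnS -addSn subnKC.
  by rewrite [in LHS]er exprD exprS -!scalerAr !mulrA.
rewrite decomp => hQ.
have [hI [h1 hp]] := Qp hi.
have yo : ~ Q i (y k0) := @yout k0.
case: (hp _ _ hQ) => [|hX]; first exact: (@prime_pow_out i (y k0) mn hi yo).
have hX1 := Qsub hi hX.
have hI1 : is_ideal (Q i.+1) by apply: Q_ideal.
case: hI1 => [_ [ID IM]].
have hyW : Q i.+1 (y k0 * W) by rewrite mulrC; apply: IM; exact: (@yin k0).
apply: (IH A').
- move=> t t' /andP [At e] /andP [At' e'] h; apply: inj => // k.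
  rewrite leq_eqVlt => /orP [/eqP ik|]; last exact: h.
  have -> : k = k0 by apply/val_inj; rewrite /= -ik.
  by rewrite (eqP e) (eqP e').
- by exists tm; rewrite /A' Atm eqxx ctm.
- have -> : Ssum i.+1 A' = (Ssum i.+1 A' + y k0 * W) + (-1) * (y k0 * W).
    by rewrite mulN1r addrK.
  by apply: ID => //; apply: IM.
Qed.

Lemma claim_all d : (d <= L)%N -> claim (L - d).
Proof.
elim: d => [|d IH] hd; first by rewrite subn0; apply: claim_base.
have hi : (L - d.+1 < L)%N by rewrite subnS prednK ?subn_gt0 // leq_subr.
apply: (claim_step hi); rewrite subnS prednK ?subn_gt0 //; exact: IH (ltnW hd).
Qed.

Lemma chain_contra :
  (forall t t', (forall k, ex t k = ex t' k) -> t = t') ->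
  (exists t, c t != 0) ->
  \sum_t c t *: \prod_(k : 'I_L) y k ^+ ex t k = 0 -> False.
Proof.
move=> inj [t0 ct0] e.
have := claim_all (leqnn L); rewrite subnn => /(_ predT).
apply.
- by move=> t t' _ _ h; apply: inj => k; apply: h.
- by exists t0.
have -> : Ssum 0 predT = 0.
  rewrite -e /Ssum; apply: eq_bigr => t _; congr (_ *: _) => //.
by have [I0 _] := Q_ideal (leq0n L).
Qed.

End ChainLemma.


Section Dep.
Variables (K : fieldType) (N : nat).
Local Notation R := {mpoly K[N]}.

Lemma msize_mul (p q : R) : (msize (p * q) <= msize p + msize q + 1)%N.
Proof. by rewrite addn1; apply: msizeM_le. Qed.

Lemma msize_exp (p : R) k : (msize (p ^+ k) <= k * (msize p).+1 + 1)%N.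
Proof.
elim: k => [|k IH]; first by rewrite expr0 msize1.
rewrite exprS; apply: leq_trans (msize_mul _ _) _.
have := IH; set s := msize p; set t := msize (p ^+ k); lia.
Qed.

Lemma msize_prod (I : Type) (r : seq I) (F : I -> R) :
  (msize (\prod_(i <- r) F i) <= \sum_(i <- r) (msize (F i)).+1 + 1)%N.
Proof.
elim: r => [|x r IH]; first by rewrite !big_nil msize1.
rewrite !big_cons; apply: leq_trans (msize_mul _ _) _.
have := IH; set s := msize (F x); set t := msize _; set u := (\sum_(i <- r) _)%N; lia.
Qed.

Lemma mdeg_ge (m : 'X_{1..N}) i : (m i <= mdeg m)%N.
Proof. by rewrite mdegE (bigD1 i) //= leq_addr. Qed.

Variable y : 'I_N.+1 -> R.

Definition Yp (t : 'I_N.+1 -> nat) : R := \prod_(k < N.+1) y k ^+ t k.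

Lemma alg_dep : exists D (c : {ffun 'I_N.+1 -> 'I_D} -> K),
  (exists t, c t != 0) /\ \sum_t c t *: Yp (fun k => t k) = 0.
Proof.
have [e he] : exists e, forall k, (msize (y k) <= e)%N.
  by exists (\big[maxn/0%N]_(k < N.+1) msize (y k)) => k; rewrite (bigD1 k) //= leq_maxl.
pose c0 := (N.+1 * (e.+1 + 2) + 1)%N.
pose D := (c0 ^ N + 1)%N.
pose B := (N.+1 * (D * e.+1 + 2) + 1)%N.
have hB : forall t : {ffun 'I_N.+1 -> 'I_D}, (msize (Yp (fun k => t k)) <= B)%N.
  move=> t; apply: leq_trans (msize_prod _ _) _; rewrite leq_add2r.
  have -> : (N.+1 * (D * e.+1 + 2) = \sum_(k < N.+1) (D * e.+1 + 2))%N.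
    by rewrite sum_nat_const card_ord.
  apply: leq_sum => k _.
  have h1 := msize_exp (y k) (t k).
  have h2 := he k.
  have h3 : (t k < D)%N := ltn_ord (t k).
  have h4 : (t k * (msize (y k)).+1 <= D * e.+1)%N.
    by apply: leq_mul; [apply: ltnW|].
  lia.
pose U := {ffun 'I_N.+1 -> 'I_D}.
pose V := {ffun 'I_N -> 'I_B}.
pose mon (v : V) : 'X_{1..N} := [multinom (v i : nat) | i < N].
pose M : 'M[K]_(#|U|, #|V|) :=
  \matrix_(i, j) (Yp (fun k => (enum_val i : U) k))@_(mon (enum_val j)).
have cardUV : (#|V| < #|U|)%N.
  rewrite !card_ffun !card_ord.
  have hD : (0 < D)%N by rewrite /D addn1.
  have hBD : (B <= D * c0)%N by rewrite /B /c0; nia.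
  have hc0 : (c0 ^ N < D)%N by rewrite /D addn1.
  apply: leq_ltn_trans (_ : B ^ N <= (D * c0) ^ N)%N _.
    by case: N => [|N'] //; rewrite leq_exp2r.
  rewrite expnMn expnS mulnC ltn_pmul2r //; by rewrite expn_gt0 hD.
have kn0 : kermx M != 0.
  rewrite -mxrank_eq0 mxrank_ker subn_eq0 -ltnNge.
  exact: leq_ltn_trans (rank_leq_col M) cardUV.
have [i [j hij]] : exists i j, kermx M i j != 0.
  case: (boolP [exists i, exists j, kermx M i j != 0]) => [/existsP [i /existsP [j h]]|/existsPn h].
    by exists i, j.
  exfalso; move/negP: kn0; apply; apply/eqP/matrixP => i j; idtac.
  by move: (h i) => /existsPn /(_ j) /negbNE /eqP ->; rewrite mxE.
pose r := row i (kermx M).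
have rM : r *m M = 0 by rewrite /r -row_mul mulmx_ker row0.
exists D, (fun t => r 0 (enum_rank t)); split.
  by exists (enum_val j); rewrite enum_valK /r mxE.
apply/mpolyP => mu; rewrite mcoeff0 raddf_sum /=.
under eq_bigr do rewrite mcoeffZ.
case: (ltnP (mdeg mu) B) => hmu; last first.
  rewrite big1 // => t _; rewrite memN_msupp_eq0 ?mulr0 //.
  by apply: msize_mdeg_ge; apply: leq_trans (hB t) hmu.
have hv : forall k, (mu k < B)%N by move=> k; apply: leq_ltn_trans (mdeg_ge _ k) hmu.
pose v : V := [ffun k => Ordinal (hv k)].
have muv : mu = mon v by apply/mnmP => k; rewrite mnmE ffunE.
have hz : \sum_j r 0 j * M j (enum_rank v) = 0.
  have := congr1 (fun A : 'M_(1, _) => A 0 (enum_rank v)) rM.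
  by rewrite /= mxE => ->; rewrite mxE.
rewrite -[RHS]hz.
rewrite (reindex (fun i0 : 'I_#|U| => enum_val i0)) /=; last by apply: onW_bij; apply: enum_val_bij.
apply: eq_bigr => i' _; rewrite enum_valK [M _ _]mxE enum_rankK -muv.
done.
Qed.

End Dep.

Section NoChain.
Variables (K : fieldType) (N : nat).
Local Notation R := {mpoly K[N]}.
Variables (y : 'I_N.+1 -> R) (Q : nat -> R -> Prop).
Hypothesis Qp : forall i, (i < N.+1)%N -> is_prime (Q i).
Hypothesis QLi : is_ideal (Q N.+1).
Hypothesis QL1 : ~ Q N.+1 1.
Hypothesis Qsub : forall i p, (i < N.+1)%N -> Q i p -> Q i.+1 p.
Hypothesis yin : forall i : 'I_N.+1, Q i.+1 (y i).
Hypothesis yout : forall i : 'I_N.+1, ~ Q i (y i).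

Lemma no_chain : False.
Proof.
have [D [c [[t0 ct0] e]]] := alg_dep y.
apply: (@chain_contra K N N.+1 y Q Qp QLi QL1 Qsub yin yout _
          (fun t k => (t : {ffun 'I_N.+1 -> 'I_D}) k) c).
- move=> t t' h; apply/ffunP => k; apply/val_inj; exact: h.
- by exists t0.
- exact: e.
Qed.

End NoChain.


Section Height.
Variables (K : fieldType) (n' : nat) (a : 'I_n'.+1 -> nat).
Local Notation n := n'.+1.
Hypothesis a_gt1 : forall i, (1 < a i)%N.
Hypothesis a_cop : forall i j, i != j -> coprime (a i) (a j).
Local Notation R := {mpoly K[n]}.
Local Notation g := (gg a).
Local Notation IH := (@semigroup_ideal K n g).

Definition Mz (p : R) := p@_0%MM = 0.

Lemma Mz_ideal : is_ideal Mz.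
Proof.
rewrite /Mz; split; first by rewrite mcoeff0.
split; first by move=> p q hp hq; rewrite mcoeffD hp hq addr0.
by move=> c p hp; rewrite (mcoeff0_is_multiplicative _ _).1 hp mulr0.
Qed.

Lemma Mz1 : ~ Mz 1.
Proof. by rewrite /Mz mcoeff1 eqxx => /eqP; rewrite oner_eq0. Qed.

Lemma X0_notIH : ~ IH 'X_(ord0 : 'I_n).
Proof.
rewrite /semigroup_ideal -/(phiH a _) phiH_X => /eqP.
by rewrite -size_poly_eq0 size_polyXn.
Qed.

Lemma X0_Mz : Mz 'X_(ord0 : 'I_n).
Proof.
rewrite /Mz mcoeffX; case: eqP => // /mnmP /(_ ord0).
by rewrite mnm1E eqxx mnm0E.
Qed.

Lemma no_ht_ge_IH : ~ ht_ge IH n.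
Proof.
move=> [C [Cp [Cs Cl]]].
pose Q i := if (i <= n)%N then C i else Mz.
have Qp : forall i, (i < n.+1)%N -> is_prime (Q i).
  by move=> i hi; have hi' : (i <= n)%N := hi; rewrite /Q hi'; apply: Cp.
have Qsub : forall i p, (i < n.+1)%N -> Q i p -> Q i.+1 p.
  move=> i p hi; have hi' : (i <= n)%N := hi; rewrite /Q hi'; case: ltnP => hi1.
    by have [h _] := Cs i hi1; apply: h.
  have ie : i = n by apply/eqP; rewrite eqn_leq -ltnS hi hi1.
  by rewrite ie => /Cl /(IH_const0 a_gt1 a_cop).
have hy : forall i : 'I_n.+1, exists y, Q i.+1 y /\ ~ Q i y.
  move=> i; case: (ltnP i n) => hi.
    have [_ [p [p1 p2]]] := Cs i hi.
    by exists p; rewrite /Q hi ltnW.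
  have ie : (i : nat) = n by apply/eqP; rewrite eqn_leq -ltnS ltn_ord hi.
  exists 'X_ord0; rewrite /Q ie ltnn leqnn; split; first exact: X0_Mz.
  by move/Cl; apply: X0_notIH.
have [y hyy] := fin_all_exists hy.
apply: (@no_chain K n y Q Qp _ _ Qsub).
- by rewrite /Q ltnn; exact: Mz_ideal.
- by rewrite /Q ltnn; exact: Mz1.
- by move=> i; case: (hyy i).
- by move=> i; case: (hyy i).
Qed.

Lemma ideal_height_IH : (0 < n')%N -> ideal_height IH n'.
Proof.
move=> n0; split.
  exists IH; split; first exact: IH_prime.
  split=> //; split; [exact: ht_ge_IH|exact: no_ht_ge_IH].
by move=> Q hQ sub; apply: ht_ge_over.
Qed.

Lemma ci_IH : (0 < n')%N -> complete_intersection K g.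
Proof.
move=> n0; exists n'; split; first exact: ideal_height_IH.
exact: min_gens_IH.
Qed.

End Height.


Section MinGen.
Variables (n : nat) (a : 'I_n -> nat).
Hypothesis a_gt1 : forall i, (1 < a i)%N.
Hypothesis a_cop : forall i j, i != j -> coprime (a i) (a j).
Local Notation g := (gg a).

Lemma mgs : (0 < n)%N -> minimal_generating_system g.
Proof.
move=> n0; split; [|split; [|split]].
- move=> i j e; apply/eqP/negPn/negP => ij.
  by have := dvd_a_g a_gt1 ij; rewrite -e (negPf (not_dvd_a_g a_gt1 a_cop i)).
- by move=> i; apply: (gg_gt0 a_gt1).
- set d := (\big[gcdn/0]_(i < n) g i)%N.
  have dg : forall i, (d %| g i)%N by move=> i; move: (dvdnn d); rewrite {2}/d => /dvdn_biggcdP /(_ i isT).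
  have da : forall j, coprime d (a j).
    by move=> j; apply: coprime_dvdl (dg j) (cop_g_a a_gt1 a_cop j).
  pose z : 'I_n := Ordinal n0.
  have dz : coprime d (g z).
    rewrite (ggE a_gt1); apply: (big_ind (fun x => coprime d x)) => //.
    - exact: coprimen1.
    - by move=> x y hx hy; rewrite coprimeMr hx hy.
  by move: dz; rewrite /coprime (gcdn_idPl (dg z)) => /eqP.
- move=> i [c [ci e]].
  have : (a i %| g i)%N.
    rewrite e; apply: dvdn_sum => j _; case: (eqVneq j i) => [->|ji].
      by rewrite ci mul0n dvdn0.
    by apply: dvdn_mull; apply: (dvd_a_g a_gt1); rewrite eq_sym.
  by rewrite (negPf (not_dvd_a_g a_gt1 a_cop i)).
Qed.

Lemma a_inj i j : a i = a j -> i = j.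
Proof.
move=> e; apply/eqP; apply: contraTT isT => ij.
have := a_cop ij; rewrite e /coprime gcdnn => /eqP ea.
by have := a_gt1 j; rewrite ea.
Qed.

Lemma pick_pair : (2 < n)%N -> exists i0 j0, (3 <= a i0)%N /\ (a i0 < a j0)%N.
Proof.
move=> n2.
have h0 : (0 < n)%N by lia.
have h1 : (1 < n)%N by lia.
pose o0 : 'I_n := Ordinal h0; pose o1 : 'I_n := Ordinal h1; pose o2 : 'I_n := Ordinal n2.
case: (arg_maxnP a (isT : predT o0)) => j0 _ jmax.
have [i1 [i2 [d12 [d1 d2]]]] : exists i1 i2 : 'I_n, [/\ i1 != i2, i1 != j0 & i2 != j0].
  case: (eqVneq j0 o0) => [->|n0]; first by exists o1, o2.
  case: (eqVneq j0 o1) => [->|n1]; first by exists o0, o2.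
  by exists o0, o1; split => //; rewrite eq_sym.
have lt : forall i, i != j0 -> (a i < a j0)%N.
  move=> i ij; have hm : (a i <= a j0)%N := jmax i isT; rewrite ltn_neqAle hm andbT; apply/eqP => e.
  by move/eqP: ij; apply; apply: a_inj.
case: (leqP 3 (a i1)) => h; first by exists i1, j0; split => //; apply: lt.
exists i2, j0; split; last exact: lt.
have e1 : a i1 = 2%N by have := a_gt1 i1; lia.
case: (leqP 3 (a i2)) => // h2.
have e2 : a i2 = 2%N by have := a_gt1 i2; lia.
by move/eqP: d12; case; apply: a_inj; rewrite e1 e2.
Qed.

End MinGen.

Section NotQuad.
Variables (K : fieldType) (n' : nat) (a : 'I_n'.+1 -> nat).
Local Notation n := n'.+1.
Hypothesis a_gt1 : forall i, (1 < a i)%N.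
Hypothesis a_cop : forall i j, i != j -> coprime (a i) (a j).
Local Notation R := {mpoly K[n]}.
Local Notation g := (gg a).
Local Notation w := (ww a).
Local Notation P := (PP a).
Local Notation IH := (@semigroup_ideal K n g).

Lemma mdeg_EE i : mdeg (EE a i) = a i.
Proof. by rewrite /EE mdegMn mdeg1 mul1n. Qed.

Lemma not_quadratic : (2 < n)%N -> ~ quadratic K g.
Proof.
move=> n2 [S [S2 gen]].
have [i0 [j0 [h3 hlt]]] := pick_pair a_gt1 a_cop n2.
have ij : i0 != j0 by apply/eqP => e; rewrite e ltnn in hlt.
pose f : R := 'X_[EE a i0] - 'X_[EE a j0].
have fE : forall m, f@_m = (EE a i0 == m)%:R - (EE a j0 == m)%:R.
  by move=> m; rewrite mcoeffB !mcoeffX.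
have fi0 : f@_(EE a i0) = 1 by rewrite fE eqxx EE_eq // eq_sym (negPf ij) subr0.
have f0 : f != 0 by apply/eqP => e; move: fi0; rewrite e mcoeff0 => /eqP; rewrite eq_sym oner_eq0.
have fIH : IH f.
  rewrite /semigroup_ideal -/(phiH a f) /phiH rmorphB /= -!/(phiH a _) !phiH_X.
  by rewrite !ww_EE // subrr.
have supp : forall m, m \in msupp f -> m = EE a i0 \/ m = EE a j0.
  by move=> m /msuppB_le; rewrite mem_cat !msuppX !inE => /orP [] /eqP ->; [left|right].
have ld : low_deg f = a i0.
  apply/eqP; rewrite eqn_leq; apply/andP; split.
    by rewrite -(mdeg_EE i0); apply: low_deg_le; rewrite mcoeff_msupp fi0 oner_neq0.
  apply: low_deg_ge.
    rewrite -(mdeg_EE i0) ltnW //; apply: msize_mdeg_lt; by rewrite mcoeff_msupp fi0 oner_neq0.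
  by move=> m /supp [] ->; rewrite mdeg_EE // ltnW.
have inf : initial_form f = 'X_[EE a i0].
  apply/mpolyP => m; rewrite coef_initial_form ld mcoeffX fE.
  case: (eqVneq (EE a i0) m) => [<-|ne]; first by rewrite mdeg_EE eqxx EE_eq // eq_sym (negPf ij) subr0.
  case: (eqVneq (EE a j0) m) => [<-|ne2].
    by rewrite mdeg_EE; case: eqP => // e; rewrite e ltnn in hlt.
  by case: ifP; rewrite ?subrr.
have hX : @initial_ideal K n g 'X_[EE a i0].
  exists [:: 'X_[EE a i0]], [:: 1]; split.
    move=> q; rewrite inE => /eqP ->; exists f; split => //; split => //.
    exact/eqP.
  by split => //; rewrite big_ord_recl big_ord0 addr0 mul1r.
have goodS : forall q, S q -> Good a q.
  move=> q hq; have : @initial_ideal K n g q.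
    apply/gen; exists [:: q], [:: 1]; split; first by move=> x; rewrite inE => /eqP ->.
    by split => //; rewrite big_ord_recl big_ord0 addr0 mul1r.
  apply: Good_gen => x [h [hh [_ ->]]] m.
  rewrite mcoeff_msupp coef_initial_form; case: ifP => _; last by rewrite eqxx.
  by rewrite -mcoeff_msupp; apply: (IH_Good a_gt1 a_cop).
have [t [c [ht [_ e]]]] := (proj2 (gen _)) hX.
have := congr1 (mcoeff (EE a i0)) e.
rewrite mcoeffX eqxx raddf_sum /= big1 => [/eqP|k _]; first by rewrite oner_eq0.
have tk : S t`_k by apply: ht; apply: mem_nth.
apply: memN_msupp_eq0; apply/negP => /msuppM_le /allpairsP [[m1 m2] /= [h1 h2 em]].
have d2 : mdeg m2 = 2%N by move: (S2 _ tk) => /dhomogP; apply.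
have wP := goodS _ tk _ h2.
have m2k : forall k', k' != i0 -> m2 k' = 0%N.
  move=> k' ne; have := congr1 (fun m : 'X_{1..n} => m k') em.
  rewrite /= mnmDE /EE mulmnE mnm1E eq_sym (negPf ne) mul0n. lia.
have dm2 : mdeg m2 = m2 i0.
  rewrite mdegE (bigD1 i0) //= big1 ?addn0 // => k' ne; exact: m2k.
have wm2 : w m2 = (m2 i0 * g i0)%N.
  rewrite /ww (bigD1 i0) //= big1 ?addn0 // => k' ne; by rewrite m2k.
move: wP; rewrite wm2 -dm2 d2 -(aMg a_gt1 i0) leq_mul2r.
have := gg_gt0 a_gt1 i0; case: (g i0) => // gi _ /=.
rewrite leqNgt; move: h3; case: (a i0) => [|[|[|ai]]] //.
Qed.

End NotQuad.


Local Close Scope ring_scope.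

Theorem proposition3p5 (K : fieldType) (n : nat) (a : 'I_n -> nat) :
  (2 < n)%N ->
  (forall i, 1 < a i)%N ->
  (forall i j, i != j -> coprime (a i) (a j)) ->
  let P := (\prod_(i < n) a i)%N in
  let g := fun i => (P %/ a i)%N in
  minimal_generating_system g /\
  complete_intersection K g /\ ~ quadratic K g.
Proof.
case: n a => [|n'] a hn ha hc P g //.
have -> : g = gg a by [].
have n0 : (0 < n')%N by case: n' hn a ha hc P g.
split; first by apply: mgs.
split; first exact: ci_IH.
exact: not_quadratic.
Qed.
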